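(* Let $q=2^n>2$ and let $g:\mathbb{F}_{q^2}\to\mathbb{F}_{q^2}$ be a function such that $f(x)=g(x^{q-1})$ takes values in $\mathbb{F}_2$ for all $x\in\mathbb{F}_{q^2}$. Then for $\alpha\in\mathbb{F}_{q^2}$, $$W_f(\alpha)=\begin{cases}(-1)^{g(0)}-\sum_{\lambda\in U}(-1)^{g(\lambda)}+(-1)^{g(\alpha^{1-q})}\,q, & \text{if } \alpha\neq0,\\[2pt] (-1)^{g(0)}+(q-1)\sum_{\lambda\in U}(-1)^{g(\overline{\lambda}^2)}, & \text{if } \alpha=0.\end{cases}$$
   Context: For $x\in\mathbb{F}_{q^2}$ write $\overline{x}=x^{q}$; $U=\{\eta\in\mathbb{F}_{q^2}:\eta^{q+1}=1\}$ is the unit circle. For $\alpha\ne0$, $\alpha^{1-q}$ denotes $(\alpha^{q-1})^{-1}$. The Walsh transform of a Boolean function $f:\mathbb{F}_{q^2}\to\mathbb{F}_2$ is $W_f(\alpha)=\sum_{x\in\mathbb{F}_{q^2}}(-1)^{f(x)+\mathrm{Tr}_1^{2n}(\alpha x)}$, where $\mathrm{Tr}_1^{2n}$ is the absolute trace of $\mathbb{F}_{2^{2n}}$. Values in $\mathbb{F}_2$ in exponents of $-1$ are identified with $0,1\in\mathbb{Z}$ (note $g$ takes values in $\mathbb{F}_2$ on $\{0\}\cup U$). *)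

(* Defs.v *)
From HB Require Import structures.
From mathcomp Require Import all_boot all_order all_algebra all_field.
Set Implicit Arguments. Unset Strict Implicit. Unset Printing Implicit Defensive.
Import Order.TTheory GRing.Theory Num.Theory.
Local Open Scope ring_scope.

(* (-1)^b for b in F_2 (embedded in F as 0 / 1), as an integer. *)
Definition sgnF (F : fieldType) (b : F) : int := if b == 0 then 1 else -1.

Definition abs_trace (F : fieldType) (m : nat) (x : F) : F :=
  \sum_(i < m) x ^+ (2 ^ i).

Definition walsh (F : finFieldType) (m : nat) (f : F -> F) (a : F) : int :=
  \sum_(x : F) sgnF (f x + abs_trace m (a * x)).

Definition unit_circle (F : finFieldType) (q : nat) : {set F} :=
  [set e : F | e ^+ q.+1 == 1].

(* Main.v *)
Require Import Defs.
From HB Require Import structures.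
From mathcomp Require Import all_boot all_order all_algebra all_field.
From mathcomp Require Import zify ring.
Import Order.TTheory GRing.Theory Num.Theory.
Local Open Scope ring_scope.
Set Implicit Arguments. Unset Strict Implicit.

Lemma c2_two (F : fieldType) : 2%N \in [pchar F] -> (2%:R : F) = 0.
Proof. exact: pcharf0. Qed.

Lemma c2_addxx (F : fieldType) (x : F) : 2%N \in [pchar F] -> x + x = 0.
Proof. by move=> hc; rewrite -mulr2n -mulr_natr c2_two // mulr0. Qed.

Lemma c2_opp (F : fieldType) (x : F) : 2%N \in [pchar F] -> - x = x.
Proof. by move=> hc; apply/eqP; rewrite eq_sym -subr_eq0 opprK c2_addxx. Qed.

Lemma c2_frobD (F : fieldType) (i : nat) (x y : F) : 2%N \in [pchar F] ->
  (x + y) ^+ (2 ^ i) = x ^+ (2 ^ i) + y ^+ (2 ^ i).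
Proof.
move=> hc; elim: i => [|i IH]; first by rewrite !expr1.
by rewrite expnSr !exprM IH sqrrD -mulr_natr c2_two // mulr0 addr0.
Qed.

Lemma c2_frob_inj (F : fieldType) (k : nat) (x y : F) : 2%N \in [pchar F] ->
  x ^+ (2 ^ k) = y ^+ (2 ^ k) -> x = y.
Proof.
move=> hc e.
have : (x + y) ^+ (2 ^ k) = 0 by rewrite c2_frobD // e c2_addxx.
move/eqP; rewrite expf_eq0 => /andP [_ /eqP h].
by rewrite -[y]c2_opp //; apply/eqP; rewrite -subr_eq0 opprK h.
Qed.

Lemma sgnF_add (F : fieldType) (b c : F) : 2%N \in [pchar F] ->
  (b == 0) || (b == 1) -> (c == 0) || (c == 1) ->
  sgnF (b + c) = sgnF b * sgnF c.
Proof.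
move=> hc /orP [] /eqP -> /orP [] /eqP ->; rewrite /sgnF ?add0r ?addr0 ?eqxx ?oner_eq0 //.
by rewrite c2_addxx // eqxx.
Qed.

Lemma trace_add (F : fieldType) m (x y : F) : 2%N \in [pchar F] ->
  abs_trace m (x + y) = abs_trace m x + abs_trace m y.
Proof. by move=> hc; rewrite /abs_trace -big_split; apply: eq_bigr => i _; rewrite c2_frobD. Qed.

Lemma trace0 (F : fieldType) m : abs_trace m (0 : F) = 0.
Proof. by rewrite /abs_trace big1 // => i _; rewrite expr0n expn_eq0. Qed.

Lemma sq_sum (F : fieldType) m (a : 'I_m -> F) : 2%N \in [pchar F] ->
  (\sum_(i < m) a i) ^+ 2 = \sum_(i < m) a i ^+ 2.
Proof.
move=> hc; elim/big_rec2: _ => [|i y z _ <-]; first by rewrite expr0n.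
by rewrite -(expn1 2) c2_frobD.
Qed.

Lemma trace01 (F : finFieldType) m (x : F) : 2%N \in [pchar F] -> #|F| = (2 ^ m)%N ->
  (0 < m)%N -> (abs_trace m x == 0) || (abs_trace m x == 1).
Proof.
move=> hc hF hm.
have e : abs_trace m x ^+ 2 = abs_trace m x.
  rewrite /abs_trace sq_sum //.
  case: m hF hm => // m hF _.
  rewrite big_ord_recr big_ord_recl /=.
  rewrite -exprM -expnSr -hF expf_card expn0 expr1 addrC; congr (_ + _).
  by apply: eq_bigr => i _; rewrite -exprM -expnSr.
have : abs_trace m x * (abs_trace m x - 1) = 0 by rewrite mulrBr mulr1 -expr2 e subrr.
by move/eqP; rewrite mulf_eq0 subr_eq0.
Qed.

Lemma trace_Fq (F : fieldType) n (y : F) : 2%N \in [pchar F] ->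
  y ^+ (2 ^ n) = y -> abs_trace (2 * n) y = 0.
Proof.
move=> hc hy; rewrite /abs_trace.
have -> : (2 * n = n + n)%N by lia.
rewrite big_split_ord /=.
rewrite [X in _ + X](eq_bigr (fun i : 'I_n => y ^+ (2 ^ i))) ?c2_addxx // => i _.
by rewrite expnD exprM hy.
Qed.

Lemma card_roots (F : finFieldType) (p : {poly F}) : p != 0 ->
  (#|[set x | root p x]| < size p)%N.
Proof.
move=> hp; rewrite cardE; apply: max_poly_roots => //; last exact: enum_uniq.
by apply/allP => x; rewrite mem_enum inE.
Qed.

Lemma trace_exists1 (F : finFieldType) m : 2%N \in [pchar F] -> #|F| = (2 ^ m)%N ->
  (0 < m)%N -> exists y : F, abs_trace m y = 1.
Proof.
move=> hc hF hm.
case: m hF hm => // m hF hm.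
pose P : {poly F} := \sum_(i < m.+1) 'X^(2 ^ i).
have hP : forall y, P.[y] = abs_trace m.+1 y.
  by move=> y; rewrite /P horner_sum; apply: eq_bigr => i _; rewrite hornerXn.
have P0 : P != 0.
  apply/eqP => h.
  have : P`_1 = 1.
    rewrite /P coef_sum.
    rewrite big_ord_recl /= coefXn expn0 eqxx big1 ?addr0 // => i _.
    rewrite coefXn; have : (1 < 2 ^ i.+1)%N by rewrite -{1}(expn0 2) ltn_exp2l.
    by rewrite /bump /= add1n; case: eqP => // <-.
  by rewrite h coef0 => /eqP; rewrite eq_sym oner_eq0.
have sz : (size P <= (2 ^ m.+1.-1).+1)%N.
  apply: leq_trans (size_sum _ _ _) _.
  apply/bigmax_leqP => i _; rewrite size_polyXn ltnS leq_exp2l //.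
  by have := ltn_ord i; lia.
case: (pickP (fun y : F => abs_trace m.+1 y == 1)) => [y /eqP hy|hne]; first by exists y.
have all0 : forall y, root P y.
  move=> y; rewrite /root hP.
  case/orP: (trace01 y hc hF hm) => // h1.
  by move: (hne y); rewrite /= (eqP h1) eqxx.
have := card_roots P0.
have -> : [set x | root P x] = setT by apply/setP => x; rewrite !inE all0.
rewrite cardsT hF => h.
have h2 : (2 ^ m.+1 = 2 * 2 ^ m.+1.-1)%N by rewrite expnS.
have := leq_trans h sz; rewrite h2.
have : (0 < 2 ^ m.+1.-1)%N by rewrite expn_gt0.
lia.
Qed.

Definition Fib (F : finFieldType) (q : nat) (l : F) : {set F} :=
  [set x : F | (x != 0) && (x ^+ q.-1 == l)].

Lemma q_ge4 n : (1 < n)%N -> (4 <= 2 ^ n)%N.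
Proof. by move=> hn; rewrite (_ : 4 = 2 ^ 2)%N // leq_exp2l. Qed.

Lemma unit_pow (F : finFieldType) (x : F) : x != 0 -> x ^+ (#|F|.-1) = 1.
Proof.
move=> hx.
have hp : (0 < #|F|)%N by apply/card_gt0P; exists 0.
by apply: (mulIf hx); rewrite mul1r -exprSr prednK // expf_card.
Qed.

Lemma pow_in_U (F : finFieldType) n (x : F) : #|F| = ((2 ^ n) ^ 2)%N -> (1 < n)%N ->
  x != 0 -> x ^+ (2 ^ n).-1 \in unit_circle F (2 ^ n).
Proof.
move=> hF hn hx; rewrite inE -exprM.
have -> : ((2 ^ n).-1 * (2 ^ n).+1 = #|F|.-1)%N.
  rewrite hF -mulnn; have := q_ge4 hn; set q := (2 ^ n)%N; nia.
by rewrite unit_pow.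
Qed.

Lemma zero_notin_U (F : finFieldType) q : (0 : F) \notin unit_circle F q.
Proof. by rewrite inE expr0n /= eq_sym oner_eq0. Qed.

Lemma fib_le (F : finFieldType) n (l : F) : (1 < n)%N ->
  (#|Fib (2 ^ n) l| <= (2 ^ n).-1)%N.
Proof.
move=> hn; have h4 := q_ge4 hn.
have hs : (0 < (2 ^ n).-1)%N by lia.
have p0 : ('X^((2 ^ n).-1) - l%:P : {poly F}) != 0.
  by rewrite -size_poly_eq0 size_XnsubC.
have := card_roots p0; rewrite size_XnsubC // ltnS; apply: leq_trans.
apply: subset_leq_card; apply/subsetP => x; rewrite !inE => /andP [_ /eqP e].
by rewrite /root !hornerE e subrr.
Qed.

Lemma U_le (F : finFieldType) n : (1 < n)%N ->
  (#|unit_circle F (2 ^ n)| <= (2 ^ n).+1)%N.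
Proof.
move=> hn.
have p0 : ('X^((2 ^ n).+1) - 1 : {poly F}) != 0.
  by rewrite -size_poly_eq0 size_Xn_sub_1.
have := card_roots p0; rewrite size_Xn_sub_1 // ltnS; apply: leq_trans.
apply: subset_leq_card; apply/subsetP => x; rewrite !inE => /eqP e.
by rewrite /root !hornerE e subrr.
Qed.

Lemma sum_fib (F : finFieldType) n : #|F| = ((2 ^ n) ^ 2)%N -> (1 < n)%N ->
  (\sum_(l in unit_circle F (2 ^ n)) #|Fib (2 ^ n) l| = ((2 ^ n) ^ 2).-1)%N.
Proof.
move=> hF hn.
rewrite -hF -(cardC1 (0 : F)) -sum1_card; symmetry.
rewrite (partition_big (fun x : F => x ^+ (2 ^ n).-1) (mem (unit_circle F (2 ^ n)))).
  by apply: eq_bigr => l _; rewrite -sum1_card; apply: eq_bigl => x; rewrite !inE.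
by move=> x hx; apply: pow_in_U.
Qed.

Lemma U_card (F : finFieldType) n : #|F| = ((2 ^ n) ^ 2)%N -> (1 < n)%N ->
  #|unit_circle F (2 ^ n)| = (2 ^ n).+1.
Proof.
move=> hF hn.
have h1 := sum_fib hF hn.
have h2 : (\sum_(l in unit_circle F (2 ^ n)) #|Fib (2 ^ n) l| <=
           \sum_(l in unit_circle F (2 ^ n)) (2 ^ n).-1)%N.
  by apply: leq_sum => l _; apply: fib_le.
rewrite sum_nat_const h1 in h2.
have h3 := @U_le F n hn.
have h4 := q_ge4 hn.
move: h2 h3 h4; rewrite -mulnn; set q := (2 ^ n)%N; set u := #|_|; nia.
Qed.

Lemma fib_card (F : finFieldType) n (l : F) : #|F| = ((2 ^ n) ^ 2)%N -> (1 < n)%N ->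
  l \in unit_circle F (2 ^ n) -> #|Fib (2 ^ n) l| = (2 ^ n).-1.
Proof.
move=> hF hn hl.
have h1 := sum_fib hF hn.
rewrite (bigD1 l) //= in h1.
have h2 : (\sum_(j in unit_circle F (2 ^ n) | j != l) #|Fib (2 ^ n) j| <=
           \sum_(j in unit_circle F (2 ^ n) | j != l) (2 ^ n).-1)%N.
  by apply: leq_sum => j _; apply: fib_le.
have h3 : (\sum_(j in unit_circle F (2 ^ n)) (2 ^ n).-1 = ((2 ^ n) ^ 2).-1)%N.
  rewrite sum_nat_const U_card // -mulnn; have := q_ge4 hn; set q := (2 ^ n)%N; nia.
rewrite (bigD1 l) //= in h3.
have h5 := @fib_le F n l hn.
move: h1 h2 h3 h5; set A := (\sum_(j | _) #|_|)%N; set B := (\sum_(j | _) _)%N.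
set C := #|_|; set D := ((2 ^ n) ^ 2).-1; lia.
Qed.

Lemma shift_sum (F : finFieldType) m (a x0 : F) (L : {set F}) : 2%N \in [pchar F] ->
  (forall y : F, (abs_trace m y == 0) || (abs_trace m y == 1)) ->
  (forall x y, x \in L -> y \in L -> x + y \in L) -> x0 \in L ->
  abs_trace m (a * x0) = 1 ->
  \sum_(x in L) sgnF (abs_trace m (a * x)) = 0.
Proof.
move=> hc htr hL hx0 h1.
set S := \sum_(x in L) _.
have e : S = - S.
  rewrite {1}/S (reindex_inj (addIr x0)) /=.
  rewrite -sumrN; apply: eq_big => x.
    apply/idP/idP => [h|h]; last exact: hL.
    by have := hL _ _ h hx0; rewrite -addrA c2_addxx // addr0.
  move=> _; rewrite mulrDr trace_add // sgnF_add // h1.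
  by rewrite [sgnF 1]/sgnF oner_eq0 mulrN1.
lia.
Qed.

Definition Lset (F : finFieldType) (q : nat) (l : F) : {set F} :=
  [set x : F | x ^+ q == l * x].

Lemma Lset_closed (F : finFieldType) n (l x y : F) : 2%N \in [pchar F] ->
  x \in Lset (2 ^ n) l -> y \in Lset (2 ^ n) l -> x + y \in Lset (2 ^ n) l.
Proof.
by move=> hc; rewrite !inE => /eqP hx /eqP hy; rewrite c2_frobD // hx hy mulrDr.
Qed.

Lemma Lset_split (F : finFieldType) n (l : F) (G : F -> int) : (1 < n)%N ->
  \sum_(x in Lset (2 ^ n) l) G x = G 0 + \sum_(x in Fib (2 ^ n) l) G x.
Proof.
move=> hn; have h4 := q_ge4 hn.
rewrite (bigD1 0) /=; last by rewrite inE mulr0 expr0n; case: (2 ^ n)%N h4.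
congr (_ + _); apply: eq_bigl => x; rewrite !inE.
case: (eqVneq x 0) => [->|hx]; first by rewrite andbF.
rewrite andbT -{1}(prednK (_ : 0 < 2 ^ n)%N); last by lia.
rewrite exprSr; apply/eqP/eqP => [/(mulIf hx)|->] //.
Qed.

Lemma decomp (F : finFieldType) n (G : F -> int) : #|F| = ((2 ^ n) ^ 2)%N -> (1 < n)%N ->
  \sum_x G x = G 0 + \sum_(l in unit_circle F (2 ^ n)) \sum_(x in Fib (2 ^ n) l) G x.
Proof.
move=> hF hn.
rewrite (bigD1 0) //=; congr (_ + _).
rewrite (partition_big (fun x : F => x ^+ (2 ^ n).-1) (mem (unit_circle F (2 ^ n)))).
  by apply: eq_bigr => l _; apply: eq_bigl => x; rewrite !inE.
by move=> x hx; apply: pow_in_U.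
Qed.

Lemma hF2 (F : finFieldType) n : #|F| = ((2 ^ n) ^ 2)%N -> #|F| = (2 ^ (2 * n))%N.
Proof. by rewrite mulnC expnM. Qed.

Lemma Fib_sub_L (F : finFieldType) n (l x : F) : (1 < n)%N ->
  x \in Fib (2 ^ n) l -> x \in Lset (2 ^ n) l.
Proof.
move=> hn; have h4 := q_ge4 hn.
rewrite !inE => /andP [_ /eqP <-].
by rewrite -exprSr prednK //; lia.
Qed.

Lemma T_cases (F : finFieldType) n (a l : F) : 2%N \in [pchar F] ->
  #|F| = ((2 ^ n) ^ 2)%N -> (1 < n)%N -> l \in unit_circle F (2 ^ n) ->
  let T := \sum_(x in Fib (2 ^ n) l) sgnF (abs_trace (2 * n) (a * x)) in
  T = ((2 ^ n).-1)%:Z \/ T = -1.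
Proof.
move=> hc hF hn hl T.
have hm : (0 < 2 * n)%N by lia.
have htr := fun y : F => trace01 y hc (hF2 hF) hm.
case: (pickP (fun x => (x \in Fib (2 ^ n) l) && (abs_trace (2 * n) (a * x) == 1)))
  => [x0 /andP [hx0 /eqP h1]|hno].
  right.
  have := @shift_sum F (2 * n) a x0 (Lset (2 ^ n) l) hc htr (fun x y => @Lset_closed F n l x y hc) (Fib_sub_L hn hx0) h1.
  rewrite Lset_split // mulr0 trace0 {1}/sgnF eqxx -/T; lia.
left; rewrite /T (eq_bigr (fun _ => 1)) ?sumr_const ?fib_card ?natz // => x hx.
have := hno x; rewrite hx /=.
by case/orP: (htr (a * x)) => /eqP -> //; rewrite /sgnF eqxx.
Qed.

Lemma T_l0 (F : finFieldType) n (a : F) : 2%N \in [pchar F] ->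
  #|F| = ((2 ^ n) ^ 2)%N -> (1 < n)%N -> a != 0 ->
  \sum_(x in Fib (2 ^ n) (a ^+ (2 ^ n).-1)^-1) sgnF (abs_trace (2 * n) (a * x))
  = ((2 ^ n).-1)%:Z.
Proof.
move=> hc hF hn ha; have h4 := q_ge4 hn.
rewrite (eq_bigr (fun _ => 1)) ?sumr_const ?fib_card ?natz //.
- rewrite inE exprVn -exprM.
  have := pow_in_U hF hn ha; rewrite inE -exprM => /eqP ->.
  by rewrite invr1.
move=> x hx.
have hxL := Fib_sub_L hn hx; move: hxL; rewrite inE => /eqP hxq.
rewrite trace_Fq ?/sgnF ?eqxx //.
rewrite exprMn hxq -{1}(prednK (_ : 0 < 2 ^ n)%N); last by lia.
have hA : a ^+ (2 ^ n).-1 != 0 by rewrite expf_neq0.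
by rewrite exprSr; field.
Qed.
Unset Implicit Arguments.

Theorem proposition3 (F : finFieldType) (n : nat) (g : F -> F) :
  (1 < n)%N -> 2%N \in [pchar F] -> #|F| = ((2 ^ n) ^ 2)%N ->
  (forall x : F, (g (x ^+ (2 ^ n).-1) == 0) || (g (x ^+ (2 ^ n).-1) == 1)) ->
  forall a : F,
    walsh (2 * n) (fun x => g (x ^+ (2 ^ n).-1)) a =
    if a != 0 then
      sgnF (g 0) - \sum_(l in unit_circle F (2 ^ n)) sgnF (g l)
        + sgnF (g ((a ^+ (2 ^ n).-1)^-1)) * (2 ^ n)%:Z
    else
      sgnF (g 0) + ((2 ^ n)%:Z - 1)
        * \sum_(l in unit_circle F (2 ^ n)) sgnF (g ((l ^+ (2 ^ n)) ^+ 2)).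
Proof.
move=> hn hc hF hg a.
have h4 := q_ge4 hn.
have hm : (0 < 2 * n)%N by lia.
have htr := fun y : F => trace01 y hc (hF2 hF) hm.
pose T l := \sum_(x in Fib (2 ^ n) l) sgnF (abs_trace (2 * n) (a * x)).
have e0 : sgnF (abs_trace (2 * n) (a * 0)) = 1 by rewrite mulr0 trace0 /sgnF eqxx.
have W : walsh (2 * n) (fun x => g (x ^+ (2 ^ n).-1)) a =
    sgnF (g 0) + \sum_(l in unit_circle F (2 ^ n)) sgnF (g l) * T l.
  rewrite /walsh (eq_bigr (fun x => sgnF (g (x ^+ (2 ^ n).-1)) *
                    sgnF (abs_trace (2 * n) (a * x)))); last first.
    by move=> x _; rewrite sgnF_add.
  rewrite (decomp _ hF hn) e0 mulr1 expr0n /=.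
  have -> : ((2 ^ n).-1 == 0)%N = false by lia.
  congr (_ + _); apply: eq_bigr => l _; rewrite /T mulr_sumr.
  by apply: eq_bigr => x; rewrite inE => /andP [_ /eqP ->].
rewrite W; case: (eqVneq a 0) => [a0|ha] /=.
  have hT : forall l, l \in unit_circle F (2 ^ n) -> T l = ((2 ^ n).-1)%:Z.
    move=> l hl; rewrite /T a0 (eq_bigr (fun _ => 1)) ?sumr_const ?fib_card ?natz //.
    by move=> x _; rewrite mul0r trace0 /sgnF eqxx.
  rewrite (eq_bigr (fun l => ((2 ^ n).-1)%:Z * sgnF (g l))); last first.
    by move=> l hl; rewrite hT // mulrC.
  rewrite -mulr_sumr predn_int; last by lia.
  congr (_ + _ * _).
  have phiE : forall l : F, (l ^+ (2 ^ n)) ^+ 2 = l ^+ (2 ^ n.+1).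
    by move=> l; rewrite -exprM expnSr.
  have inj : injective (fun l : F => l ^+ (2 ^ n.+1)).
    by move=> x y; apply: c2_frob_inj.
  under [RHS]eq_bigr do rewrite phiE.
  rewrite [LHS](reindex_inj inj) /=; apply: eq_bigl => l.
  rewrite !inE exprAC; apply/eqP/eqP => [h|->]; last by rewrite expr1n.
  by apply: (c2_frob_inj (k := n.+1) hc); rewrite h expr1n.
set l0 := (a ^+ (2 ^ n).-1)^-1.
have hl0 : l0 \in unit_circle F (2 ^ n).
  rewrite inE exprVn.
  by have := pow_in_U hF hn ha; rewrite inE => /eqP ->; rewrite invr1.
have hT0 : T l0 = ((2 ^ n).-1)%:Z by apply: T_l0.
have hTc : forall l, l \in unit_circle F (2 ^ n) -> T l = ((2 ^ n).-1)%:Z \/ T l = -1.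
  by move=> l hl; apply: T_cases.
have [y hy] := trace_exists1 hc (hF2 hF) hm.
have glob : \sum_x sgnF (abs_trace (2 * n) (a * x)) = 0.
  have := @shift_sum F (2 * n) a (y / a) [set: F] hc htr.
  rewrite [a * _]mulrC divfK // => /(_ (fun _ _ _ _ => in_setT _) (in_setT _) hy) h.
  by rewrite -[RHS]h; apply: eq_bigl => x; rewrite in_setT.
rewrite (decomp _ hF hn) e0 in glob.
have sum1 : \sum_(l in unit_circle F (2 ^ n)) (T l + 1) = (2 ^ n)%:Z.
  rewrite big_split /= sumr_const U_card // natz.
  have -> : \sum_(l in unit_circle F (2 ^ n)) T l = -1.
    move: glob; rewrite (_ : \sum_(l in _) \sum_(x in _) _ = \sum_(l in unit_circle F (2 ^ n)) T l) //; lia.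
  lia.
have hq1 : ((2 ^ n).-1)%:Z = (2 ^ n)%:Z - 1 by rewrite predn_int //; lia.
have zero : forall l, l \in unit_circle F (2 ^ n) -> l != l0 -> T l + 1 = 0.
  rewrite (bigD1 l0) //= hT0 hq1 in sum1.
  have rest : \sum_(l in unit_circle F (2 ^ n) | l != l0) (T l + 1) = 0.
    rewrite subrK in sum1; apply: (addrI ((2 ^ n)%:Z)); rewrite addr0; exact: sum1.
  move=> l hl hne.
  apply: (psumr_eq0P _ rest); last by rewrite hl hne.
  move=> j /andP [hj _]; case: (hTc j hj) => ->; lia.
have -> : \sum_(l in unit_circle F (2 ^ n)) sgnF (g l) * T l =
    \sum_(l in unit_circle F (2 ^ n)) sgnF (g l) * (T l + 1)
    - \sum_(l in unit_circle F (2 ^ n)) sgnF (g l).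
  by rewrite -sumrB; apply: eq_bigr => l _; rewrite mulrDr mulr1 addrK.
rewrite (bigD1 l0) //= big1 ?addr0; last first.
  by move=> j /andP [hj hne]; rewrite zero // mulr0.
rewrite hT0 hq1 subrK; ring.
Qed.
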